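(* Let $\{P_n\}_{n\ge0}$ and $\{Q_n\}_{n\ge0}$ be Brenke polynomial sets generated by $$A_1(t)B_1(xt)=\sum_{n\ge0}\frac{P_n(x)}{n!}t^n,\qquad A_2(t)B_2(xt)=\sum_{n\ge0}\frac{Q_n(x)}{n!}t^n,$$ with $A_i(t)=\sum_k a^{(i)}_kt^k$, $B_i(t)=\sum_kb^{(i)}_kt^k$, $a^{(i)}_0\neq0$ and $b^{(i)}_k\ne0$ for all $k$. Let $\theta$ be the transfer operator from $B_1$ to $B_2$, acting termwise on formal power series in $t$ by $\theta(t^n)=\frac{b^{(2)}_n}{b^{(1)}_n}t^n$. Define the connection coefficients $C_m(n)$ by $Q_n(x)=\sum_{m=0}^nC_m(n)P_m(x)$. Then for every $m\ge0$, $$A_2(t)\,\theta\!\left(\frac{t^m}{A_1(t)}\right)=\sum_{n\ge m}\frac{m!}{n!}C_m(n)\,t^n$$ as formal power series in $t$.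
   Context: A polynomial set (PS) is a sequence $\{P_n\}_{n\ge0}$ of complex polynomials with $\deg P_n=n$. A Brenke PS is a PS generated (as formal power series in $t$) by $A(t)B(xt)=\sum_{n\ge0}P_n(x)t^n/n!$ with $A(t)=\sum_ka_kt^k$, $B(t)=\sum_kb_kt^k$, $a_0\neq0$, $b_k\ne0$ for all $k$. *)

(* Defs.v *)
(* Formal power series over a field C are represented as
   coefficient sequences  nat -> C  (f n = coefficient of t^n). *)
From HB Require Import structures.
From mathcomp Require Import all_boot all_order all_algebra.
Set Implicit Arguments. Unset Strict Implicit. Unset Printing Implicit Defensive.
Import Order.TTheory GRing.Theory Num.Theory.
Local Open Scope ring_scope.

Section FPS.
Variable C : fieldType.

Definition fps_mul (f g : nat -> C) : nat -> C :=
  fun n => \sum_(k < n.+1) f k * g (n - k)%N.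

Definition fps_shift (m : nat) (f : nat -> C) : nat -> C :=
  fun n => if (m <= n)%N then f (n - m)%N else 0.

Fixpoint fps_inv_upto (f : nat -> C) (n : nat) : seq C :=
  match n with
  | 0 => [:: (f 0%N)^-1]
  | n'.+1 =>
      let s := fps_inv_upto f n' in
      rcons s (- (f 0%N)^-1 *
               \sum_(1 <= k < n'.+2) f k * nth 0 s (n'.+1 - k)%N)
  end.

Definition fps_inv (f : nat -> C) : nat -> C :=
  fun n => nth 0 (fps_inv_upto f n) n.

Definition transfer (b1 b2 : nat -> C) (f : nat -> C) : nat -> C :=
  fun n => b2 n / b1 n * f n.

Definition brenke_pair (a b : nat -> C) : Prop :=
  a 0%N != 0 /\ forall k, b k != 0.

(* P is generated by A(t)B(xt) = sum_n P_n(x) t^n / n!, i.e. comparing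
   coefficients of t^n:  P_n(x) = n! * sum_{k=0}^n a_{n-k} b_k x^k *)
Definition brenke_generated (a b : nat -> C) (P : nat -> {poly C}) : Prop :=
  forall n, P n = (n`!)%:R *: \sum_(k < n.+1) (a (n - k)%N * b k) *: 'X^k.

End FPS.

(* Main.v *)
Require Import Defs.
From HB Require Import structures.
From mathcomp Require Import all_boot all_order all_algebra.
From mathcomp Require Import zify ring.
Import Order.TTheory GRing.Theory Num.Theory.
Local Open Scope ring_scope.

Section Aux.
Variable C : fieldType.
Implicit Types f g h : nat -> C.

Lemma size_inv_upto f n : size (fps_inv_upto f n) = n.+1.
Proof. by elim: n => [|n IH] //=; rewrite size_rcons IH. Qed.

Lemma nth_inv_upto f n i : (i <= n)%N -> nth 0 (fps_inv_upto f n) i = fps_inv f i.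
Proof.
elim: n => [|n IH] Hi.
  by move: Hi; rewrite leqn0 => /eqP ->.
rewrite leq_eqVlt in Hi; case/orP: Hi => [/eqP ->|Hi]; first by [].
rewrite /= nth_rcons size_inv_upto Hi; exact: IH.
Qed.

Lemma fps_invS f n : fps_inv f n.+1 =
  - (f 0%N)^-1 * \sum_(1 <= k < n.+2) f k * fps_inv f (n.+1 - k).
Proof.
rewrite /fps_inv /= nth_rcons size_inv_upto ltnn eqxx.
congr (_ * _); apply: eq_big_nat => k /andP[Hk1 Hk2].
by rewrite nth_inv_upto //; lia.
Qed.

Lemma fps_mul_inv f r : f 0%N != 0 -> fps_mul f (fps_inv f) r = (r == 0%N)%:R.
Proof.
move=> Hf; rewrite /fps_mul; case: r => [|r].
  by rewrite big_ord1 subnn /fps_inv /= mulfV.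
rewrite big_ord_recl subn0 fps_invS mulrA mulrN mulfV // mulN1r.
rewrite big_add1 /= big_mkord.
by rewrite addrC; apply/eqP; rewrite subr_eq0; apply/eqP;
  apply: eq_bigr => i _; rewrite /bump add1n.
Qed.

Definition tr N f : {poly C} := \poly_(i < N) f i.

Lemma fps_mul_tr N f g i : (i < N)%N -> fps_mul f g i = (tr N f * tr N g)`_i.
Proof.
move=> Hi; rewrite coefM /fps_mul; apply: eq_bigr => j _.
rewrite !coef_poly; have Hj := ltn_ord j.
have -> : (j < N)%N = true by lia.
by have -> : (i - j < N)%N = true by lia.
Qed.

Lemma fps_mulA f g h n : fps_mul (fps_mul f g) h n = fps_mul f (fps_mul g h) n.
Proof.
transitivity (((tr n.+1 f * tr n.+1 g) * tr n.+1 h)`_n).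
  rewrite coefM {1}/fps_mul; apply: eq_bigr => j _.
  have Hj := ltn_ord j.
  rewrite (@fps_mul_tr n.+1 f g j); last lia.
  rewrite coef_poly; by have -> : (n - j < n.+1)%N = true by lia.
rewrite -mulrA coefM {1}/fps_mul; apply: eq_bigr => j _.
have Hj := ltn_ord j.
rewrite (@fps_mul_tr n.+1 g h (n - j)); last lia.
rewrite coef_poly; by have -> : (j < n.+1)%N = true by lia.
Qed.

Lemma coef_brenke (a b : nat -> C) (P : nat -> {poly C}) n j : brenke_generated a b P ->
  (P n)`_j = (n`!)%:R * (if (j <= n)%N then a (n - j)%N * b j else 0).
Proof.
move=> hP; rewrite hP coefZ.
rewrite (_ : \sum_(k < n.+1) _ = \poly_(k < n.+1) (a (n - k)%N * b k));
  last by rewrite poly_def.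
by rewrite coef_poly ltnS.
Qed.

End Aux.

Theorem mainTheorem5 (C : numClosedFieldType)
  (a1 b1 a2 b2 : nat -> C) (P Q : nat -> {poly C})
  (hAB1 : brenke_pair a1 b1) (hAB2 : brenke_pair a2 b2)
  (hP : brenke_generated a1 b1 P) (hQ : brenke_generated a2 b2 Q)
  (Cc : nat -> nat -> C)
  (hC : forall n, Q n = \sum_(m < n.+1) Cc m n *: P m) :
  forall m n : nat,
    fps_mul a2 (transfer b1 b2 (fps_shift m (fps_inv a1))) n
    = if (m <= n)%N then (m`!)%:R / (n`!)%:R * Cc m n else 0.
Proof.
move=> m n.
have [hA1 hB1] := hAB1.
case: (leqP m n) => Hmn; last first.
  rewrite /fps_mul big1 // => k _; rewrite /transfer /fps_shift.
  by rewrite ifF ?mulr0 //; lia.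
have hfact : forall k, (k`!)%:R != 0 :> C.
  by move=> k; rewrite pnatr_eq0 -lt0n fact_gt0.
set g := fun k => a2 k * (b2 (n - k)%N / b1 (n - k)%N).
set D := fun i => (i`!)%:R / (n`!)%:R * Cc i n.
set e := fun k => D (n - k)%N.
have Hg : forall k, (k <= n)%N -> g k = fps_mul e a1 k.
  move=> k Hk.
  have H : (n`!)%:R * (a2 k * b2 (n - k)%N) = \sum_(i < k.+1)
      Cc (n - i)%N n * (((n - i)%N`!)%:R * (a1 (k - i)%N * b1 (n - k)%N)).
    have := congr1 (fun p : {poly C} => p`_(n - k)%N) (hC n).
    rewrite /= (@coef_brenke _ _ _ _ _ _ hQ) coef_sum.
    rewrite (_ : (n - k <= n)%N = true); last lia.
    rewrite (_ : (n - (n - k))%N = k); last lia.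
    move=> ->.
    rewrite -(big_mkord (fun _ => true) (fun i => (Cc i n *: P i)`_(n - k))) big_rev_mkord subn0.
    rewrite (big_ord_widen n.+1 (fun i => Cc (n - i)%N n * (((n - i)%N`!)%:R * (a1 (k - i)%N * b1 (n - k)%N)))); last lia.
    rewrite [RHS]big_mkcond; apply: eq_bigr => i _ /=.
    have Hi := ltn_ord i.
    rewrite coefZ (@coef_brenke _ _ _ _ _ _ hP).
    rewrite (_ : (n.+1 - i.+1)%N = (n - i)%N); last lia.
    case: ifP => Hik.
      rewrite ifT; last lia.
      by rewrite (_ : (n - i - (n - k))%N = (k - i)%N); last lia.
    by rewrite ifF ?mulr0 //; lia.
  have hb := hB1 (n - k)%N; have hn := hfact n.
  transitivity ((n`!%:R * (a2 k * b2 (n - k)%N)) / (n`!%:R * b1 (n - k)%N)).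
    rewrite /g; field; by rewrite hb hn.
  rewrite H mulr_suml; apply: eq_bigr => i _; rewrite /e /D /=; field; by rewrite hb hn.

transitivity (\sum_(k < n.+1 | (k < (n - m).+1)%N) g k * fps_inv a1 (n - m - k)).
  rewrite /fps_mul [RHS]big_mkcond /=; apply: eq_bigr => k _.
  rewrite /transfer /fps_shift /g; case: ifP => Hk.
    rewrite ifT; last by have := ltn_ord k; lia.
    rewrite (_ : (n - k - m = n - m - k)%N); last lia.
    by rewrite mulrA.
  rewrite ifF ?mulr0 //; have := ltn_ord k; lia.
rewrite -(big_ord_widen n.+1 (fun k => g k * fps_inv a1 (n - m - k))); last lia.
transitivity (fps_mul (fps_mul e a1) (fps_inv a1) (n - m)).
  apply: eq_bigr => k _; rewrite Hg //; have := ltn_ord k; lia.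
rewrite fps_mulA.
transitivity (\sum_(k < (n - m).+1) e k * ((n - m - k) == 0)%N%:R).
  by apply: eq_bigr => k _; rewrite fps_mul_inv.
rewrite big_ord_recr /= subnn mulr1 big1 ?add0r; last first.
  by move=> k _; rewrite subn_eq0 leqNgt ltn_ord mulr0.
by rewrite /e /D (_ : (n - (n - m))%N = m); last lia.
Qed.
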